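(* Let $p\geq3$ be prime and $n\geq 2$. (1) If $1\leq i<p-1$, then $\Lambda_{i,n}^{p^{n-1}}-1=\sum_{l=1}^{i}\frac{(-1)^l}{[l!]}\zeta_{2(p-1)}^l p^{\frac{l}{p-1}}+O\left(p^{1+\frac{1}{p(p-1)}}\right)$. (2) If $i\geq p-1$, then $\Lambda_{i,n}^{p^{n-1}}-1=\sum_{l=1}^{p-1} \frac{(-1)^l}{[l!]}\zeta_{2(p-1)}^l p^{\frac{l}{p-1}}+\zeta_{2(p-1)}\, p^{1+\frac{1}{p-1}-\frac{1}{p^{i-p+2}}}+O\left(p^{1+\frac{1}{p-1}}\right)$.
   Context: $\mathbb{L}_p$ is the $p$-adic Mal'cev–Neumann field of formal sums $\sum_{x\in\mathbb{Q}}[\alpha_x]p^x$ ($\alpha_x\in\bar{\mathbb{F}}_p$, $[\cdot]$ Teichmüller lift, well-ordered support), valuation $v_p$ = minimum of support, $p^x$ the element with support $\{x\}$ and coefficient $1$; $\alpha=\beta+O(p^x)$ means $v_p(\alpha-\beta)\geq x$. $\zeta_{2(p-1)}$ is (the Teichmüller lift of) a fixed primitive $2(p-1)$-th root of unity in $\bar{\mathbb{F}}_p$; $[k!]$ is the Teichmüller lift of $k!\bmod p$. For $n\ge2$ define $\Lambda_{i,n}=\sum_{k=0}^i \frac{(-1)^{kn}}{[k!]}\zeta_{2(p-1)}^k p^{\frac{k}{p^{n-1}(p-1)}}$ for $0\leq i\leq p-1$, and $\Lambda_{i,n}=\Lambda_{p-1,n}+ \sum_{l=n}^{i-p+n}(-1)^n\zeta_{2(p-1)}\,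 p^{\frac{1}{p^{n-2}(p-1)}-\frac{1}{p^l}}$ for $i\geq p$. *)

(* Defs.v *)
From HB Require Import structures.
From mathcomp Require Import all_boot all_order all_algebra.
Set Implicit Arguments. Unset Strict Implicit. Unset Printing Implicit Defensive.
Import Order.TTheory GRing.Theory Num.Theory.
Local Open Scope ring_scope.

(* An abstract "p-adic Mal'cev-Neumann-type" valued field, recording exactly
   the structure of L_p used in the statement:
   - L       : the field (L_p),
   - F       : the coefficient field of characteristic p (playing bar F_p),
   - v       : the valuation v_p on nonzero elements (rational valued),
   - tm      : the Teichmuller lift [.] : F -> L,
   - pw x    : the element p^x (x : rat). *)
Record pMN (p : nat) := PMN {
  mnL : fieldType;
  mnF : fieldType;
  mn_char : p \in [pchar mnF];
  v : mnL -> rat;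
  tm : mnF -> mnL;
  pw : rat -> mnL;
  v_mul : forall x y : mnL, x != 0 -> y != 0 -> v (x * y) = v x + v y;
  v_add : forall x y : mnL, x != 0 -> y != 0 -> x + y != 0 ->
            Num.min (v x) (v y) <= v (x + y);
  pw_add : forall x y : rat, pw (x + y) = pw x * pw y;
  pw_1 : pw 1 = p%:R;
  pw_neq0 : forall x, pw x != 0;
  v_pw : forall x, v (pw x) = x;
  tm_mul : forall a b : mnF, tm (a * b) = tm a * tm b;
  tm_0 : tm 0 = 0;
  tm_1 : tm 1 = 1;
  tm_neq0 : forall a, a != 0 -> tm a != 0;
  v_tm : forall a, a != 0 -> v (tm a) = 0;
  tm_add : forall a b : mnF,
      tm (a + b) - (tm a + tm b) = 0 \/ 0 < v (tm (a + b) - (tm a + tm b))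
}.

Section Defs.
Variables (p : nat) (M : pMN p).
Local Notation L := (mnL M).

(* alpha = beta + O(p^c), i.e. v_p(alpha - beta) >= c *)
Definition bigOp (a b : L) (c : rat) : Prop :=
  a - b = 0 \/ c <= v (a - b).

Definition invtfact (k : nat) : L := (@tm _ M (k`!%:R))^-1.

Definition Lambda (z : mnF M) (n i : nat) : L :=
  let zt := @tm _ M z in
  let head := \sum_(0 <= k < (minn i (p - 1)).+1)
      (-1) ^+ (k * n) * invtfact k * zt ^+ k
      * @pw _ M ((k%:R : rat) / ((p ^ (n - 1) * (p - 1))%N%:R)) in
  if (i <= p - 1)%N then head
  else head + \sum_(n <= l < (i - p + n).+1)
      (-1) ^+ n * zt * @pw _ M (1 / ((p ^ (n - 2) * (p - 1))%N%:R) - 1 / ((p ^ l)%N%:R)).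

Definition mainSum (z : mnF M) (m : nat) : L :=
  \sum_(1 <= l < m.+1)
    (-1) ^+ l * invtfact l * (@tm _ M z) ^+ l * @pw _ M ((l%:R : rat) / ((p - 1)%N%:R)).
End Defs.

(* Submission.v *)
Require Import Defs.
From mathcomp Require Import all_boot all_order all_algebra.
From mathcomp Require Import ring lra zify.
Import Order.TTheory GRing.Theory Num.Theory.
Local Open Scope ring_scope.
Set Implicit Arguments. Unset Strict Implicit. Unset Printing Implicit Defensive.

Section Val.
Variables (p : nat) (M : pMN p).
Local Notation L := (mnL M).

Definition Ic (c : rat) (x : L) : Prop := x = 0 \/ c <= v x.

Lemma v1 : v (1 : L) = 0.
Proof.
have := @v_mul _ M 1 1 (oner_neq0 _) (oner_neq0 _); rewrite mulr1 => h.
have : v (1:L) + v (1:L) - v (1:L) = v (1:L) - v (1:L) by rewrite -h.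
by rewrite addrK subrr.
Qed.

Lemma vN1 : v (-1 : L) = 0.
Proof.
have n1 : (-1 : L) != 0 by rewrite oppr_eq0 oner_neq0.
have := @v_mul _ M (-1) (-1) n1 n1; rewrite mulrNN mulr1 v1 => h.
have : (v (-1 : L)) *+ 2 = 0 by rewrite mulr2n -h.
by move/eqP; rewrite mulrn_eq0 /= => /eqP.
Qed.

Lemma vN (x : L) : x != 0 -> v (- x) = v x.
Proof.
move=> x0; rewrite -mulN1r v_mul ?vN1 ?add0r //.
by rewrite oppr_eq0 oner_neq0.
Qed.

Lemma Ic0 c : Ic c 0. Proof. by left. Qed.

Lemma Ic_le c c' x : c' <= c -> Ic c x -> Ic c' x.
Proof. by move=> h [->|h2]; [left|right; apply: le_trans h2]. Qed.

Lemma Ic_add c x y : Ic c x -> Ic c y -> Ic c (x + y).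
Proof.
move=> [->|hx]; first by rewrite add0r.
move=> [->|hy]; first by rewrite addr0; right.
have [x0|x0] := eqVneq x 0; first by rewrite x0 add0r; right.
have [y0|y0] := eqVneq y 0; first by rewrite y0 addr0; right.
have [s0|s0] := eqVneq (x + y) 0; first by left.
right; apply: le_trans (v_add x0 y0 s0).
by rewrite le_min hx hy.
Qed.

Lemma IcN c x : Ic c x -> Ic c (- x).
Proof.
move=> [->|h]; first by rewrite oppr0; left.
have [x0|x0] := eqVneq x 0; first by rewrite x0 oppr0; left.
by right; rewrite vN.
Qed.

Lemma Ic_sub c x y : Ic c x -> Ic c y -> Ic c (x - y).
Proof. by move=> hx hy; apply: Ic_add => //; apply: IcN. Qed.

Lemma Ic_mul a b x y : Ic a x -> Ic b y -> Ic (a + b) (x * y).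
Proof.
move=> [->|hx]; first by rewrite mul0r; left.
move=> [->|hy]; first by rewrite mulr0; left.
have [x0|x0] := eqVneq x 0; first by rewrite x0 mul0r; left.
have [y0|y0] := eqVneq y 0; first by rewrite y0 mulr0; left.
by right; rewrite v_mul // lerD.
Qed.

Lemma Ic_mulN a x (k : nat) : Ic a x -> Ic a (x *+ k).
Proof.
move=> h; elim: k => [|k ih]; first by rewrite mulr0n; left.
by rewrite mulrS; apply: Ic_add.
Qed.

Lemma Ic_1 : Ic 0 (1 : L).
Proof. by right; rewrite v1. Qed.

Lemma Ic_nat (k : nat) : Ic 0 (k%:R : L).
Proof. exact: Ic_mulN Ic_1. Qed.

Lemma Ic_exp a x (k : nat) : Ic a x -> Ic (a * k%:R) (x ^+ k).
Proof.
move=> h; elim: k => [|k ih]; first by rewrite mulr0 expr0; exact: Ic_1.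
by rewrite exprS mulrSr mulrDr mulr1 addrC; apply: Ic_mul.
Qed.

Lemma Ic_v x : x != 0 -> Ic (v x) x.
Proof. by move=> _; right. Qed.

Lemma Ic_pw q : Ic q (@pw _ M q).
Proof. by right; rewrite v_pw. Qed.

Lemma Ic_sum (I : Type) (r : seq I) (P : pred I) (F : I -> L) c :
  (forall i, P i -> Ic c (F i)) -> Ic c (\sum_(i <- r | P i) F i).
Proof.
move=> h; elim/big_rec: _ => [|i s Pi hs]; first by left.
by apply: Ic_add => //; apply: h.
Qed.

Definition Ipos (x : L) : Prop := x = 0 \/ 0 < v x.

Lemma Ipos_add x y : Ipos x -> Ipos y -> Ipos (x + y).
Proof.
move=> [->|hx]; first by rewrite add0r.
move=> [->|hy]; first by rewrite addr0; right.
have [x0|x0] := eqVneq x 0; first by rewrite x0 add0r; right.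
have [y0|y0] := eqVneq y 0; first by rewrite y0 addr0; right.
have [s0|s0] := eqVneq (x + y) 0; first by left.
right; apply: lt_le_trans (v_add x0 y0 s0).
by rewrite lt_min hx hy.
Qed.

Lemma IposN x : Ipos x -> Ipos (- x).
Proof.
move=> [->|h]; first by rewrite oppr0; left.
have [x0|x0] := eqVneq x 0; first by rewrite x0 oppr0; left.
by right; rewrite vN.
Qed.

Lemma Ic_Ipos c x : 0 < c -> Ic c x -> Ipos x.
Proof. by move=> hc [->|h]; [left|right; apply: lt_le_trans h]. Qed.

End Val.

Section Int.
Variables (p : nat) (M : pMN p).
Hypothesis pp : prime p.
Hypothesis p3 : (3 <= p)%N.
Local Notation L := (mnL M).
Local Notation F := (mnF M).
Local Notation pw := (@pw _ M).
Local Notation tm := (@tm _ M).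

Lemma pw0 : pw 0 = 1.
Proof.
have h := pw_add M 0 0; rewrite addr0 in h.
have : pw 0 * pw 0 = pw 0 * 1 by rewrite mulr1 -h.
by move/(mulfI (pw_neq0 M 0)).
Qed.

Lemma pwX q (k : nat) : pw q ^+ k = pw (q * k%:R).
Proof.
elim: k => [|k ih]; first by rewrite expr0 mulr0 pw0.
by rewrite exprS ih -pw_add mulrSr mulrDr mulr1 addrC.
Qed.

Lemma pL : (p%:R : L) = pw 1.
Proof. by rewrite pw_1. Qed.

Lemma Ic_p : Ic 1 (p%:R : L).
Proof. rewrite pL; exact: Ic_pw. Qed.

Lemma tmX a (k : nat) : tm (a ^+ k) = tm a ^+ k.
Proof.
elim: k => [|k ih]; first by rewrite !expr0 tm_1.
by rewrite !exprS tm_mul ih.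
Qed.

Lemma tm_nat_pos (k : nat) : Ipos (tm (k%:R) - (k%:R : L)).
Proof.
elim: k => [|k ih]; first by rewrite tm_0 subrr; left.
have h : tm (k.+1%:R) - (k.+1%:R : L) =
   (tm (k%:R + 1) - (tm (k%:R) + tm 1)) + (tm (k%:R) - k%:R).
  by rewrite tm_1 -!natr1; ring.
rewrite h; apply: Ipos_add => //.
by have [->|] := tm_add (k%:R : F) 1; [left|right].
Qed.

Lemma nat_L_v (k : nat) : ~~ (p %| k)%N -> (k%:R : L) != 0 /\ v (k%:R : L) = 0.
Proof.
move=> nd.
have kF : (k%:R : F) != 0 by rewrite -(dvdn_pcharf (mn_char M)).
have t0 := tm_neq0 kF; have vt := v_tm kF.
have hp := tm_nat_pos k.
have kL : (k%:R : L) != 0.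
  apply/negP=> /eqP e; rewrite e subr0 in hp.
  by case: hp => [/eqP|]; [rewrite (negbTE t0)|rewrite vt ltxx].
split=> //.
case: (Ic_nat M k) => [/eqP|h]; first by rewrite (negbTE kL).
apply/eqP; rewrite eq_le h andbT; rewrite leNgt; apply/negP => hlt.
have : Ipos (tm (k%:R) : L).
  have -> : (tm (k%:R) : L) = (tm (k%:R) - k%:R) + k%:R by rewrite subrK.
  by apply: Ipos_add => //; right.
by case => [/eqP|]; [rewrite (negbTE t0)|rewrite vt ltxx].
Qed.

Definition mid (x y : L) (lo : nat) :=
  \sum_(lo <= k < p) x ^+ (p - k) * y ^+ k *+ 'C(p, k).

Lemma p_gt1 : (1 < p)%N. Proof. exact: prime_gt1. Qed.

Lemma expand (x y : L) : (x + y) ^+ p = x ^+ p + y ^+ p + mid x y 1.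
Proof.
rewrite exprDn -(big_mkord xpredT (fun i => x ^+ (p - i) * y ^+ i *+ 'C(p, i))).
rewrite big_nat_recr //= big_ltn; last by rewrite (ltn_trans _ p_gt1).
rewrite subn0 subnn bin0 binn expr0 mulr1 mul1r /mid.
rewrite !mulr1n; ring.
Qed.

Lemma mid1 (x y : L) : mid x y 1 = x ^+ (p - 1) * y *+ p + mid x y 2.
Proof. by rewrite /mid big_ltn ?p_gt1 // expr1 bin1. Qed.

Lemma Ic_binp (k : nat) : (0 < k < p)%N -> Ic 1 ('C(p, k)%:R : L).
Proof.
move=> hk; have d := prime_dvd_bin pp hk.
rewrite -(divnK d) natrM -[1]add0r; apply: Ic_mul; [exact: Ic_nat|exact: Ic_p].
Qed.

Lemma Ic_mid (x y : L) a b B lo : (0 < lo)%N -> Ic a x -> Ic b y ->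
  (forall k, (lo <= k < p)%N -> B <= a * (p - k)%:R + b * k%:R) ->
  Ic (1 + B) (mid x y lo).
Proof.
move=> lo0 hx hy hB; rewrite /mid big_nat_cond; apply: Ic_sum => k /andP[hk _].
apply: (@Ic_le _ _ (1 + (a * (p - k)%:R + b * k%:R))); first by rewrite lerD2l; apply: hB.
rewrite -[_ *+ 'C(p, k)]mulr_natl; apply: Ic_mul.
  by apply: Ic_binp; case/andP: hk => h1 ->; rewrite (leq_trans lo0 h1).
by apply: Ic_mul; apply: Ic_exp.
Qed.

Lemma frob2 (x y : L) c : 0 <= c -> Ic c x -> Ic c y ->
  Ic (1 + c * p%:R) ((x + y) ^+ p - x ^+ p - y ^+ p).
Proof.
move=> c0 hx hy; rewrite expand.
have -> : x ^+ p + y ^+ p + mid x y 1 - x ^+ p - y ^+ p = mid x y 1 by ring.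
apply: Ic_mid hx hy _ => // k /andP[_ hk].
by rewrite -mulrDr -natrD subnK // ltnW.
Qed.

Lemma frob_sum (I : Type) (r : seq I) (P : pred I) (G : I -> L) c : 0 <= c ->
  (forall i, P i -> Ic c (G i)) ->
  Ic (1 + c * p%:R) ((\sum_(i <- r | P i) G i) ^+ p - \sum_(i <- r | P i) G i ^+ p).
Proof.
move=> c0 h; elim: r => [|i r ih]; first by rewrite !big_nil expr0n /= (gtn_eqF (prime_gt0 pp)) subrr; left.
rewrite !big_cons; case: ifP => Pi //.
set s := \sum_(j <- r | P j) G j; set s2 := \sum_(j <- r | P j) G j ^+ p.
have -> : (G i + s) ^+ p - (G i ^+ p + s2) = ((G i + s) ^+ p - G i ^+ p - s ^+ p) + (s ^+ p - s2) by ring.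
apply: Ic_add => //; apply: frob2 => //; first exact: h.
exact: Ic_sum.
Qed.

Lemma perturb (A E : L) e B : 0 <= e -> Ic 0 A -> Ic e E -> B <= e * p%:R -> B <= 1 + e ->
  Ic B ((A + E) ^+ p - A ^+ p).
Proof.
move=> e0 hA hE h1 h2; rewrite expand.
have -> : A ^+ p + E ^+ p + mid A E 1 - A ^+ p = E ^+ p + mid A E 1 by ring.
apply: Ic_add; first by apply: Ic_le h1 _; apply: Ic_exp.
apply: Ic_le h2 _; apply: Ic_mid hA hE _ => // k /andP[hk _].
by rewrite mul0r add0r -[X in X <= _]mulr1 ler_wpM2l // ler1n.
Qed.

End Int.

Section Teich.
Variables (p : nat) (M : pMN p).
Hypothesis pp : prime p.
Hypothesis p3 : (3 <= p)%N.
Local Notation L := (mnL M).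
Local Notation F := (mnF M).
Local Notation pw := (@pw _ M).
Local Notation tm := (@tm _ M).

Lemma vV (x : L) : x != 0 -> v (x^-1) = - v x.
Proof.
move=> x0; have := v_mul x0 (invr_neq0 x0); rewrite mulfV // v1 => h.
by move/eqP: h; rewrite eq_sym addrC addr_eq0 => /eqP.
Qed.

Lemma Ic_inv0 (x : L) : x != 0 -> v x = 0 -> Ic 0 (x^-1).
Proof. by move=> x0 vx; right; rewrite vV // vx oppr0. Qed.

Lemma natp_Ic (m : nat) : Ic 1 ((m%:R : L) ^+ p - m%:R).
Proof.
elim: m => [|m ih]; first by rewrite expr0n /= (gtn_eqF (prime_gt0 pp)) subrr; left.
rewrite -natr1 (expand pp) expr1n.
have -> : (m%:R : L) ^+ p + 1 + mid (m%:R) 1 1 - (m%:R + 1) =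
   ((m%:R : L) ^+ p - m%:R) + mid (m%:R) 1 1 by ring.
apply: Ic_add => //; rewrite -[1]addr0; apply: (Ic_mid pp (a := 0) (b := 0)) => //.
- exact: Ic_nat.
- exact: Ic_1.
- by move=> k _; rewrite !mul0r addr0.
Qed.

Lemma tm_natp (m : nat) : tm (m%:R) ^+ p = tm (m%:R).
Proof. by rewrite -tmX; congr tm; exact: (pFrobenius_aut_nat (mn_char M) m). Qed.

Lemma tm_nat1 (m : nat) : Ic 1 (tm (m%:R) - (m%:R : L)).
Proof.
set d := tm (m%:R) - (m%:R : L).
have [d0|d0] := eqVneq d 0; first by left.
case: (tm_nat_pos M m) => [/eqP|vd]; first by rewrite -/d (negbTE d0).
rewrite -/d in vd.
have [h|h] := lerP 1 (v d); first by right.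
exfalso.
have hd : d = ((m%:R : L) ^+ p - m%:R) + d ^+ p + mid (m%:R) d 1.
  have e : tm (m%:R) = (m%:R : L) + d by rewrite /d addrC subrK.
  have := tm_natp m; rewrite e (expand pp) => e2.
  by rewrite -[in LHS](addKr (m%:R : L) d) -[in X in _ + X = _]e2; ring.
have : Ic (Num.min 1 (v d * p%:R)) d.
  rewrite [X in Ic _ X]hd; apply: Ic_add; first apply: Ic_add.
  - by apply: Ic_le (natp_Ic m); rewrite ge_min lexx.
  - by apply: Ic_le (Ic_exp p (Ic_v d0)); rewrite ge_min lexx orbT.
  - apply: (@Ic_le _ _ (1 + 0)); first by rewrite addr0 ge_min lexx.
    apply: (Ic_mid pp (a := 0) (b := v d)) => //; first exact: Ic_nat.
    + exact: Ic_v.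
    + by move=> k _; rewrite mul0r add0r mulr_ge0 // ltW.
case=> [/eqP|]; first by rewrite (negbTE d0).
rewrite ge_min leNgt h /= => h2.
have : v d < v d * p%:R.
  by rewrite -[X in X < _]mulr1 ltr_pM2l // ltr1n (prime_gt1 pp).
by rewrite ltNge h2.
Qed.

Lemma fact_ndvd (k : nat) : (k < p)%N -> ~~ (p %| k`!)%N.
Proof.
elim: k => [|k ih] hk; first by rewrite fact0 dvdn1 (gtn_eqF (prime_gt1 pp)).
rewrite factS Euclid_dvdM // negb_or ih ?(ltn_trans _ hk) // andbT.
by apply/negP => /(dvdn_leq (ltn0Sn k)); rewrite leqNgt hk.
Qed.

Lemma factF (k : nat) : (k < p)%N -> (k`!%:R : F) != 0.
Proof. by move=> hk; rewrite -(dvdn_pcharf (mn_char M)) fact_ndvd. Qed.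

Definition bf (k : nat) : L := (k`!%:R : L)^-1.

Lemma factL (k : nat) : (k < p)%N -> (k`!%:R : L) != 0 /\ v (k`!%:R : L) = 0.
Proof. by move=> hk; apply: nat_L_v; apply: fact_ndvd. Qed.

Lemma Ic_bf k : (k < p)%N -> Ic 0 (bf k).
Proof. by move=> hk; case: (factL hk) => h1 h2; apply: Ic_inv0. Qed.

Lemma Ic_a k : (k < p)%N -> Ic 0 (invtfact M k).
Proof.
move=> hk; rewrite /invtfact; apply: Ic_inv0; first exact: tm_neq0 (factF hk).
exact: v_tm (factF hk).
Qed.

Lemma a_frob k : invtfact M k ^+ p = invtfact M k.
Proof. by rewrite /invtfact exprVn tm_natp. Qed.

Lemma a0 : invtfact M 0 = 1.
Proof. by rewrite /invtfact fact0 tm_1 invr1. Qed.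

Lemma a_bf k : (k < p)%N -> Ic 1 (invtfact M k - bf k).
Proof.
move=> hk; rewrite /invtfact /bf.
have t0 := tm_neq0 (factF hk); have vt := v_tm (factF hk).
case: (factL hk) => f0 vf.
have -> : (tm (k`!%:R))^-1 - (k`!%:R : L)^-1 =
   ((k`!%:R : L) - tm (k`!%:R)) * ((tm (k`!%:R))^-1 * (k`!%:R : L)^-1).
  by field; apply/andP.
rewrite -[1]addr0; apply: Ic_mul.
  by rewrite -opprB; apply: IcN; apply: tm_nat1.
by rewrite -[0]addr0; apply: Ic_mul; apply: Ic_inv0.
Qed.

End Teich.

Section Poly.
Variables (p : nat) (M : pMN p).
Hypothesis pp : prime p.
Hypothesis p3 : (3 <= p)%N.
Local Notation L := (mnL M).
Local Notation F := (mnF M).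
Local Notation pw := (@pw _ M).
Local Notation tm := (@tm _ M).
Local Notation bf := (@bf _ M).

Definition Icoef (P : {poly L}) := forall d, Ic 0 P`_d.

Lemma Icoef_mul P Q : Icoef P -> Icoef Q -> Icoef (P * Q).
Proof.
move=> hP hQ d; rewrite coefM; apply: Ic_sum => j _.
by rewrite -[0]addr0; apply: Ic_mul.
Qed.

Lemma Icoef_1 : Icoef 1.
Proof. by move=> d; rewrite coef1; exact: Ic_nat. Qed.

Lemma Icoef_exp P k : Icoef P -> Icoef (P ^+ k).
Proof.
move=> hP; elim: k => [|k ih]; first by rewrite expr0; exact: Icoef_1.
by rewrite exprS; apply: Icoef_mul.
Qed.

Lemma coef0_exp (P : {poly L}) k : (P ^+ k)`_0 = P`_0 ^+ k.
Proof.
elim: k => [|k ih]; first by rewrite !expr0 coef1.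
by rewrite exprS coefM big_ord1 subnn ih exprS.
Qed.

Lemma coef_low_exp (P : {poly L}) : P`_0 = 0 -> forall k d, (d < k)%N -> (P ^+ k)`_d = 0.
Proof.
move=> h0; elim=> [|k ih] d hd //.
rewrite exprSr coefM; apply: big1 => [[j hj]] _ /=.
have [jk|jk] := ltnP j k; first by rewrite ih // mul0r.
have ej : j = d by lia.
by rewrite ej subnn h0 mulr0.
Qed.

Definition eps : {poly L} := \poly_(k < p) bf k.

Lemma coef_eps k : eps`_k = if (k < p)%N then bf k else 0.
Proof. by rewrite coef_poly. Qed.

Lemma bf0 : bf 0 = 1.
Proof. by rewrite /Submission.bf fact0 invr1. Qed.

Lemma bfS k : (k.+1 < p)%N -> bf k.+1 * k.+1%:R = bf k.
Proof.
move=> hk; rewrite /Submission.bf factS natrM invfM.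
case: (factL M pp (ltnW hk)) => h1 _.
case: (nat_L_v M (k:=k.+1)) => [|h2 _].
  by apply/negP => /(dvdn_leq (ltn0Sn k)); rewrite leqNgt hk.
by field; rewrite h1 /= addrC natr1.
Qed.

Lemma deriv_eps : eps^`() = eps - bf p.-1 *: 'X^(p.-1).
Proof.
apply/polyP => k; rewrite coef_deriv coefB coefZ coefXn !coef_eps.
have p1 : p = p.-1.+1 by rewrite prednK // prime_gt0.
have [hk|hk] := ltnP k.+1 p.
  rewrite (ltn_trans (ltnSn k) hk) -[bf _ *+ _]mulr_natr bfS //.
  have -> : (k == p.-1) = false by apply/negbTE; rewrite neq_ltn -ltnS -p1 hk.
  by rewrite mulr0 subr0.
rewrite mul0rn.
have [e|ne] := eqVneq k p.-1.
  by rewrite e ltn_predL prime_gt0 // mulr1 subrr.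
have -> : (k < p)%N = false by apply/negbTE; lia.
by rewrite mulr0 subrr.
Qed.

Definition Fp : {poly L} := eps ^+ p.

Lemma Fp_coef d : (d < p)%N -> Fp`_d * d`!%:R = p%:R ^+ d.
Proof.
have p1 : p = p.-1.+1 by rewrite prednK // prime_gt0.
have hF : Fp^`() = (Fp - bf p.-1 *: ('X^(p.-1) * eps ^+ p.-1)) *+ p.
  rewrite /Fp deriv_exp deriv_eps /= mulrBl -scalerAl -exprS -p1.
  by rewrite -mulr_natr.
elim: d => [|d ih] hd.
  by rewrite fact0 mulr1 expr0 /Fp coef0_exp coef_eps prime_gt0 // bf0 expr1n.
have := congr1 (fun P : {poly L} => P`_d) hF.
rewrite coef_deriv coefMn coefB coefZ coefXnM.
have -> : (d < p.-1)%N by rewrite -ltnS -p1.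
rewrite mulr0 subr0 => e.
have e' : Fp`_d.+1 * d.+1%:R = Fp`_d * p%:R by rewrite !mulr_natr.
by rewrite factS natrM mulrA e' -mulrA [p%:R * _]mulrC mulrA (ih (ltnW hd)) exprSr.
Qed.


Lemma expandR (R : comNzRingType) (x y : R) :
  (x + y) ^+ p = x ^+ p + y ^+ p + \sum_(1 <= k < p) x ^+ (p - k) * y ^+ k *+ 'C(p, k).
Proof.
rewrite exprDn -(big_mkord xpredT (fun i => x ^+ (p - i) * y ^+ i *+ 'C(p, i))).
rewrite big_nat_recr //= big_ltn; last by rewrite (ltn_trans _ (prime_gt1 pp)).
rewrite subn0 subnn bin0 binn expr0 mulr1 mul1r !mulr1n; ring.
Qed.

Definition Gp : {poly L} := Fp - (eps - 1) ^+ p - 1 - p%:R *: 'X.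
Definition Hp : {poly L} :=
  \sum_(1 <= k < p) ('C(p, k) %/ p)%:R *: (eps - 1) ^+ k - 'X.

Lemma Gp_H : Gp = p%:R *: Hp.
Proof.
have e : Fp = (1 + (eps - 1)) ^+ p by rewrite addrC subrK.
rewrite /Gp /Hp e expandR expr1n scalerBr scaler_sumr.
have -> : \sum_(1 <= k < p) 1 ^+ (p - k) * (eps - 1) ^+ k *+ 'C(p, k) =
   \sum_(1 <= k < p) p%:R *: (('C(p, k) %/ p)%:R *: (eps - 1) ^+ k).
  rewrite big_nat_cond [RHS]big_nat_cond; apply: eq_bigr => k /andP[/andP[h1 h2] _].
  rewrite scalerA -natrM mulnC divnK; last by apply: prime_dvd_bin => //; rewrite h1 h2.
  by rewrite scaler_nat expr1n mul1r.
set S := \sum_(1 <= k < p) _.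
rewrite addrC; ring.
Qed.

Lemma Icoef_epsm1 : Icoef (eps - 1).
Proof.
move=> d; rewrite coefB coef_eps coef1; apply: Ic_sub; last exact: Ic_nat.
by case: ifP => h; [exact: Ic_bf|left].
Qed.

Lemma Icoef_H : Icoef Hp.
Proof.
move=> d; rewrite /Hp coefB coefX; apply: Ic_sub; last exact: Ic_nat.
rewrite coef_sum; apply: Ic_sum => k _; rewrite coefZ -[0]addr0; apply: Ic_mul.
  exact: Ic_nat.
by apply: Icoef_exp; exact: Icoef_epsm1.
Qed.

Lemma Gcoef1 d : Ic 1 Gp`_d.
Proof.
rewrite Gp_H coefZ -[1]addr0; apply: Ic_mul; [exact: Ic_p|exact: Icoef_H].
Qed.

Lemma epsm1_0 : (eps - 1)`_0 = 0.
Proof. by rewrite coefB coef_eps prime_gt0 // bf0 coef1 subrr. Qed.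

Lemma Gcoef_low d : (d < p)%N -> Gp`_d = if (d <= 1)%N then 0 else Fp`_d.
Proof.
move=> hd; rewrite /Gp !coefB coefZ coefX coef1 (coef_low_exp epsm1_0 hd) subr0.
have := Fp_coef hd.
case: d hd => [|[|d]] hd /=.
  by rewrite fact0 mulr1 expr0 => ->; rewrite subrr mulr0 subr0.
  by rewrite mulr1 expr1 => ->; rewrite subr0 mulr1 subrr.
by rewrite !subr0 mulr0 subr0.
Qed.

Lemma horner_eps (X : L) :
  eps.[X] = 1 + \sum_(1 <= k < p) bf k * X ^+ k.
Proof.
rewrite horner_poly -(big_mkord xpredT (fun k => bf k * X ^+ k)).
by rewrite big_ltn ?prime_gt0 // bf0 expr0 mulr1.
Qed.

Lemma poly_key (X : L) c : 0 <= c -> c * p%:R <= 1 -> Ic c X ->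
  Ic (1 + c * p%:R)
   ((1 + \sum_(1 <= k < p) bf k * X ^+ k) ^+ p - 1
     - (\sum_(1 <= k < p) bf k * X ^+ k) ^+ p - p%:R * X).
Proof.
move=> c0 cp hX.
set U := \sum_(1 <= k < p) _.
have -> : (1 + U) ^+ p - 1 - U ^+ p - p%:R * X = Gp.[X].
  rewrite /Gp /Fp !hornerE horner_eps -/U.
  have -> : 1 + U - 1 = U by rewrite addrC addKr.
  ring.
rewrite horner_coef; apply: Ic_sum => [[i hi]] _ /=.
have [hip|hip] := ltnP i p.
  rewrite (Gcoef_low hip); case: ifP => hi1; first by rewrite mul0r; left.
  have : Fp`_i = p%:R ^+ i * bf i.
    by case: (factL M pp hip) => f0 _; rewrite /Submission.bf -(Fp_coef hip) mulfK.
  move=> ->; apply: (@Ic_le _ _ (1 * i%:R + 0 + c * i%:R)).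
    rewrite mul1r addr0.
    have h2 : (2 <= i)%N by rewrite ltnNge hi1.
    have : 2%:R <= i%:R :> rat by rewrite ler_nat.
    have : 0 <= c * i%:R by rewrite mulr_ge0.
    lra.
  apply: Ic_mul; last exact: Ic_exp.
  apply: Ic_mul; [exact: Ic_exp (Ic_p M)|exact: Ic_bf].
apply: (@Ic_le _ _ (1 + c * i%:R)).
  by rewrite lerD2l ler_wpM2l // ler_nat.
by apply: Ic_mul; [exact: Gcoef1|exact: Ic_exp].
Qed.

Lemma Ic_Ub (X : L) c : 0 <= c -> Ic c X -> Ic c (\sum_(1 <= k < p) bf k * X ^+ k).
Proof.
move=> c0 hX; rewrite big_nat_cond; apply: Ic_sum => k /andP[/andP[h1 h2] _].
apply: (@Ic_le _ _ (0 + c * k%:R)).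
  by rewrite add0r -[X in X <= _]mulr1 ler_wpM2l // ler1n.
apply: Ic_mul; [exact: Ic_bf|exact: Ic_exp].
Qed.

Lemma poly_key_a (X : L) c : 0 <= c -> c * p%:R <= 1 -> Ic c X ->
  Ic (1 + c * p%:R)
   ((1 + \sum_(1 <= k < p) invtfact M k * X ^+ k) ^+ p - 1
     - (\sum_(1 <= k < p) invtfact M k * X ^+ k) ^+ p - p%:R * X).
Proof.
move=> c0 cp hX.
set Ua := \sum_(1 <= k < p) _.
set Ub := \sum_(1 <= k < p) bf k * X ^+ k.
have hD : Ic (1 + c) (Ua - Ub).
  rewrite /Ua /Ub -sumrB big_nat_cond; apply: Ic_sum => k /andP[/andP[h1 h2] _].
  rewrite -mulrBl; apply: (@Ic_le _ _ (1 + c * k%:R)).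
    by rewrite lerD2l -[X in X <= _]mulr1 ler_wpM2l // ler1n.
  apply: Ic_mul; [exact: a_bf|exact: Ic_exp].
have hUb : Ic 0 Ub by apply: Ic_le (Ic_Ub c0 hX).
have p1 : 1 <= p%:R :> rat by rewrite ler1n prime_gt0.
have b1 : 1 + c * p%:R <= (1 + c) * p%:R.
  by rewrite mulrDl mul1r lerD2r.
have b2 : 1 + c * p%:R <= 1 + (1 + c) by rewrite lerD2l; lra.
have e1 : Ic (1 + c * p%:R) ((1 + Ua) ^+ p - (1 + Ub) ^+ p).
  have -> : 1 + Ua = (1 + Ub) + (Ua - Ub) by ring.
  apply: (perturb pp (e := 1 + c)) => //; first lra.
  by rewrite -[0]addr0; apply: Ic_add => //; exact: Ic_1.
have e2 : Ic (1 + c * p%:R) (Ua ^+ p - Ub ^+ p).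
  have -> : Ua = Ub + (Ua - Ub) by rewrite addrC subrK.
  apply: (perturb pp (e := 1 + c)) => //; lra.
have -> : (1 + Ua) ^+ p - 1 - Ua ^+ p - p%:R * X =
  ((1 + Ub) ^+ p - 1 - Ub ^+ p - p%:R * X) + ((1 + Ua) ^+ p - (1 + Ub) ^+ p)
   - (Ua ^+ p - Ub ^+ p) by ring.
apply: Ic_sub => //; apply: Ic_add => //; exact: poly_key.
Qed.

End Poly.

Section Tfacts.
Variables (p : nat) (M : pMN p) (z : mnF M).
Hypothesis pp : prime p.
Hypothesis p3 : (3 <= p)%N.
Hypothesis zprim : (2 * (p - 1))%N.-primitive_root z.
Local Notation L := (mnL M).
Local Notation F := (mnF M).
Local Notation pw := (@pw _ M).
Local Notation tm := (@tm _ M).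
Local Notation t := (@Defs.tm _ M z).

Lemma podd : odd p.
Proof. by case: (even_prime pp) => // e; move: p3; rewrite e. Qed.

Lemma sgnp (R : pzRingType) (j : nat) : (-1 : R) ^+ (p ^ j) = -1.
Proof. by rewrite -signr_odd oddX podd orbT. Qed.

Lemma sgnp1 (R : pzRingType) : (-1 : R) ^+ p = -1.
Proof. by rewrite -signr_odd podd. Qed.

Lemma z_pm1 : z ^+ (p - 1) = -1.
Proof.
have h : (z ^+ (p - 1)) ^+ 2 == 1 by rewrite -exprM mulnC prim_expr_order.
rewrite sqrf_eq1 in h; case/orP: h => /eqP // h.
have hd : (2 * (p - 1) %| p - 1)%N by rewrite (prim_order_dvd zprim) h.
have hp1 : (0 < p - 1)%N by lia.
by have := dvdn_leq hp1 hd; lia.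
Qed.

Lemma tmN1 : tm (-1) = -1 :> L.
Proof.
have h : (tm (-1)) ^+ 2 == 1 :> L by rewrite -tmX sqrrN expr1n tm_1.
rewrite sqrf_eq1 in h; case/orP: h => /eqP // h.
exfalso.
have := tm_add (1 : F) (-1); rewrite subrr tm_0 tm_1 h sub0r.
have [n2 v2] : (2%:R : L) != 0 /\ v (2%:R : L) = 0.
  by apply: nat_L_v; apply/negP => /(dvdn_leq (ltn0Sn 1)); lia.
case=> [/eqP|]; first by rewrite oppr_eq0 -[1 + 1]/(2%:R) (negbTE n2).
by rewrite vN ?oppr_eq0 // -[1 + 1]/(2%:R) v2 ltxx.
Qed.

Lemma t_pm1 : t ^+ (p - 1) = -1.
Proof. by rewrite -tmX z_pm1 tmN1. Qed.

Lemma z_neq0 : z != 0.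
Proof.
apply/negP => /eqP e; have := prim_expr_order zprim; rewrite e expr0n.
have -> : (2 * (p - 1) == 0)%N = false by apply/negbTE; lia.
by move/eqP; rewrite eq_sym oner_eq0.
Qed.

Lemma Ic_t : Ic 0 t.
Proof. by right; rewrite v_tm // z_neq0. Qed.

Lemma t_p : t ^+ p = - t.
Proof.
have -> : t ^+ p = t ^+ (p - 1) * t ^+ 1 by rewrite -exprD subnK // ltnW // prime_gt1.
by rewrite t_pm1 expr1 mulN1r.
Qed.

Lemma tpow j : t ^+ (p ^ j) = (-1) ^+ j * t.
Proof.
elim: j => [|j ih]; first by rewrite expn0 expr1 expr0 mul1r.
rewrite expnSr exprM ih exprMn t_p -exprM mulnC exprM sgnp1 exprS; ring.
Qed.

Lemma powterm (s : nat) (q : rat) (j : nat) :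
  ((-1) ^+ s * t * pw q) ^+ (p ^ j) = (-1) ^+ (s + j) * t * pw (q * (p ^ j)%N%:R).
Proof.
rewrite !exprMn tpow pwX -exprM mulnC exprM sgnp exprD; ring.
Qed.

Lemma Ic_sgn (s : nat) : Ic 0 ((-1 : L) ^+ s).
Proof.
have := Ic_exp s (IcN (Ic_1 M)); by rewrite mul0r.
Qed.

Lemma Ic_term (s : nat) (q : rat) : Ic q ((-1) ^+ s * t * pw q).
Proof.
have h := Ic_mul (Ic_mul (Ic_sgn s) Ic_t) (Ic_pw M q).
by rewrite !add0r in h.
Qed.

End Tfacts.

Section Main.
Variables (p : nat) (M : pMN p) (z : mnF M) (m2 n i : nat).
Hypothesis hn : n = m2.+2.
Hypothesis pp : prime p.
Hypothesis p3 : (3 <= p)%N.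
Hypothesis zprim : (2 * (p - 1))%N.-primitive_root z.
Local Notation L := (mnL M).
Local Notation F := (mnF M).
Local Notation pw := (@pw _ M).
Local Notation t := (@Defs.tm _ M z).

Definition Dn : rat := ((p ^ (n - 1) * (p - 1))%N%:R).
Definition x0 : L := (-1) ^+ n * t * pw (1 / Dn).
Definition dl (l : nat) : rat :=
  1 / ((p ^ (n - 2) * (p - 1))%N%:R) - 1 / ((p ^ l)%N%:R).
Definition el (l : nat) : L := (-1) ^+ n * t * pw (dl l).
Definition mm := minn i (p - 1).
Definition Hs (j : nat) : L := \sum_(1 <= k < mm.+1) invtfact M k * (x0 ^+ (p ^ j)) ^+ k.
Definition Ws (j : nat) : L :=
  if (i <= p - 1)%N then 0 else \sum_(n <= l < (i - p + n).+1) el l ^+ (p ^ j).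
Definition Ss j := Hs j + Ws j.
Definition Ej j := Lambda z n i ^+ (p ^ j) - 1 - Ss j.

Lemma head_term k :
  (-1) ^+ (k * n) * invtfact M k * t ^+ k * pw ((k%:R : rat) / Dn) = invtfact M k * x0 ^+ k.
Proof.
rewrite /x0 !exprMn pwX -exprM mulnC.
have -> : (k%:R : rat) / Dn = 1 / Dn * k%:R by rewrite mulrC mul1r.
ring.
Qed.

Lemma Lambda_S : Lambda z n i = 1 + Ss 0.
Proof.
rewrite /Lambda /Ss /Hs /Ws -/Dn /= expn0.
have hh : \sum_(0 <= k < (minn i (p - 1)).+1)
    (-1) ^+ (k * n) * invtfact M k * t ^+ k * pw ((k%:R : rat) / Dn) =
    1 + \sum_(1 <= k < mm.+1) invtfact M k * (x0 ^+ 1) ^+ k.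
  rewrite big_ltn // mul0n !expr0 a0 mulr1 mul0r mul1r pw0 /mm.
  rewrite mulr1; congr (_ + _); apply: eq_bigr => k _; by rewrite expr1 head_term.
rewrite hh; case: ifP => _; first by rewrite addr0.
rewrite addrA; congr (_ + _); apply: eq_bigr => l _; by rewrite expr1.
Qed.

Local Notation P := (p%:R : rat).

Lemma P3 : 3 <= P. Proof. by rewrite ler_nat. Qed.
Lemma Pn0 : P != 0. Proof. by rewrite pnatr_eq0; lia. Qed.
Lemma P1n0 : P - 1 != 0. Proof. by have := P3; rewrite subr_eq0; apply: contraTneq => ->; lra. Qed.
Lemma Pj_gt0 j : 0 < P ^+ j. Proof. by rewrite exprn_gt0 // ltr0n; lia. Qed.
Lemma Pj_ge1 j : 1 <= P ^+ j. Proof. by rewrite exprn_ege1 // ler1n; lia. Qed.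
Lemma natP l : ((p ^ l)%N%:R : rat) = P ^+ l. Proof. by rewrite natrX. Qed.
Lemma natPm1 : ((p - 1)%N%:R : rat) = P - 1. Proof. by rewrite natrB //; lia. Qed.

Lemma hDn : Dn = P ^+ m2.+1 * (P - 1).
Proof. by rewrite /Dn hn natrM natP natPm1 subn1. Qed.

Lemma hD2 : ((p ^ (n - 2) * (p - 1))%N%:R : rat) = P ^+ m2 * (P - 1).
Proof. by rewrite hn natrM natP natPm1 subn2. Qed.

Lemma dl_nr r : dl (n + r) = 1 / (P ^+ m2 * (P - 1)) - 1 / (P ^+ m2 * P ^+ 2 * P ^+ r).
Proof. by rewrite /dl hD2 natP hn -!exprD; congr (_ - 1 / P ^+ _); lia. Qed.

Definition cj (j : nat) : rat := ((p ^ j)%N%:R : rat) / Dn.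

Lemma cj_ge0 j : 0 <= cj j.
Proof.
rewrite /cj hDn natP; apply: divr_ge0; first exact: ltW (Pj_gt0 j).
by rewrite mulr_ge0 ?ltW ?Pj_gt0 //; have := P3; lra.
Qed.

Lemma cj_le1 j : (j <= m2)%N -> cj j <= 1.
Proof.
move=> hj; rewrite /cj hDn natP ler_pdivrMr; last first.
  by rewrite mulr_gt0 ?Pj_gt0 //; have := P3; lra.
rewrite mul1r; apply: (@le_trans _ _ (P ^+ m2.+1)).
  have h1 : 1 < P by have := P3; lra.
  by rewrite ler_eXn2l //; lia.
by rewrite -[X in X <= _]mulr1 ler_wpM2l ?ltW ?Pj_gt0 //; have := P3; lra.
Qed.

Lemma cj_m2 : cj m2 = 1 / (P * (P - 1)).
Proof.
rewrite /cj hDn natP exprS; field; rewrite P1n0 Pn0 /=.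
by rewrite expf_neq0 // Pn0.
Qed.

Lemma dl_ge l : (n <= l)%N -> 1 / Dn <= dl l.
Proof.
move=> hl; have -> : l = (n + (l - n))%N by lia.
set r := (l - n)%N; rewrite dl_nr hDn.
have hP := P3; have hm := Pj_gt0 m2; have hr := Pj_ge1 r.
rewrite exprS.
set T := P ^+ m2 in hm *; set Q := P ^+ r in hr *.
have T0 : T != 0 by rewrite gt_eqF.
have Q0 : Q != 0 by rewrite gt_eqF // (lt_le_trans ltr01).
clearbody T Q.
rewrite -subr_ge0.
have -> : 1 / (T * (P - 1)) - 1 / (T * P ^+ 2 * Q) - 1 / (P * T * (P - 1)) =
   (P * Q - 1) / (T * P ^+ 2 * Q).
  by field; rewrite P1n0 Pn0 T0 Q0.
apply: divr_ge0.
  by rewrite subr_ge0; apply: (@le_trans _ _ (P * 1)); [rewrite mulr1; lra|rewrite ler_wpM2l //; lra].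
by rewrite !mulr_ge0 // ?ltW // ?(lt_le_trans ltr01) // exprn_ge0 //; lra.
Qed.

Lemma Ic_x0 : Ic (1 / Dn) x0. Proof. exact: Ic_term. Qed.
Lemma Ic_el l : Ic (dl l) (el l). Proof. exact: Ic_term. Qed.

Lemma cj_eq j : cj j = 1 / Dn * (p ^ j)%N%:R.
Proof. by rewrite /cj mulrC mul1r. Qed.

Lemma Ic_hterm j k : (1 <= k < p)%N -> Ic (cj j) (invtfact M k * (x0 ^+ (p ^ j)) ^+ k).
Proof.
move=> /andP[k1 kp].
apply: (@Ic_le _ _ (0 + 1 / Dn * (p ^ j)%N%:R * k%:R)).
  rewrite add0r cj_eq -[X in X <= _]mulr1 ler_wpM2l ?ler1n //.
  by rewrite -cj_eq cj_ge0.
apply: Ic_mul; first exact: Ic_a.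
by apply: Ic_exp; apply: Ic_exp; exact: Ic_x0.
Qed.

Lemma Ic_wterm j l : (n <= l)%N -> Ic (cj j) (el l ^+ (p ^ j)).
Proof.
move=> hl; apply: (@Ic_le _ _ (dl l * (p ^ j)%N%:R)).
  by rewrite cj_eq ler_wpM2r // dl_ge.
by apply: Ic_exp; exact: Ic_el.
Qed.

Lemma mm_lt k : (k < mm.+1)%N -> (k < p)%N.
Proof. by rewrite /mm; lia. Qed.

Lemma Ic_Hs j : Ic (cj j) (Hs j).
Proof.
rewrite /Hs big_nat_cond; apply: Ic_sum => k /andP[/andP[h1 h2] _].
by apply: Ic_hterm; rewrite h1 (mm_lt h2).
Qed.

Lemma Ic_Ws j : Ic (cj j) (Ws j).
Proof.
rewrite /Ws; case: ifP => _; first by left.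
rewrite big_nat_cond; apply: Ic_sum => l /andP[/andP[h1 h2] _].
exact: Ic_wterm.
Qed.

Lemma Ic_Ss j : Ic (cj j) (Ss j).
Proof. by apply: Ic_add; [exact: Ic_Hs|exact: Ic_Ws]. Qed.

Lemma hterm_p j k :
  (invtfact M k * (x0 ^+ (p ^ j)) ^+ k) ^+ p = invtfact M k * (x0 ^+ (p ^ j.+1)) ^+ k.
Proof. by rewrite exprMn a_frob (exprAC (x0 ^+ (p ^ j)) k p) -(exprM x0 (p ^ j) p) -expnSr. Qed.

Lemma wterm_p j l : (el l ^+ (p ^ j)) ^+ p = el l ^+ (p ^ j.+1).
Proof. by rewrite -exprM -expnSr. Qed.

Lemma Hs_frob j : Ic (1 + cj j * P) (Hs j ^+ p - Hs j.+1).
Proof.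
rewrite /Hs.
have -> : \sum_(1 <= k < mm.+1) invtfact M k * (x0 ^+ (p ^ j.+1)) ^+ k =
   \sum_(1 <= k < mm.+1) (invtfact M k * (x0 ^+ (p ^ j)) ^+ k) ^+ p.
  by apply: eq_bigr => k _; rewrite hterm_p.
rewrite big_nat_cond [X in _ - X]big_nat_cond.
apply: frob_sum => //; first exact: cj_ge0.
move=> k /andP[/andP[h1 h2] _]; apply: Ic_hterm; by rewrite h1 (mm_lt h2).
Qed.

Lemma Ws_frob j : Ic (1 + cj j * P) (Ws j ^+ p - Ws j.+1).
Proof.
rewrite /Ws; case: ifP => _.
  by rewrite expr0n /= (gtn_eqF (prime_gt0 pp)) subrr; left.
have -> : \sum_(n <= l < (i - p + n).+1) el l ^+ (p ^ j.+1) =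
   \sum_(n <= l < (i - p + n).+1) (el l ^+ (p ^ j)) ^+ p.
  by apply: eq_bigr => l _; rewrite wterm_p.
rewrite big_nat_cond [X in _ - X]big_nat_cond.
apply: frob_sum => //; first exact: cj_ge0.
by move=> l /andP[/andP[h1 h2] _]; apply: Ic_wterm.
Qed.

Lemma Ss_frob j : Ic (1 + cj j * P) (Ss j ^+ p - Ss j.+1).
Proof.
rewrite /Ss.
have -> : (Hs j + Ws j) ^+ p - (Hs j.+1 + Ws j.+1) =
  ((Hs j + Ws j) ^+ p - Hs j ^+ p - Ws j ^+ p) + (Hs j ^+ p - Hs j.+1) + (Ws j ^+ p - Ws j.+1)
  by ring.
apply: Ic_add; [apply: Ic_add|exact: Ws_frob]; last exact: Hs_frob.
apply: frob2 => //; [exact: cj_ge0|exact: Ic_Hs|exact: Ic_Ws].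
Qed.

Lemma step j : (j <= m2)%N -> Ic 1 (Ej j) -> Ic (1 + cj j) (Ej j.+1).
Proof.
move=> hj hE.
have c0 := cj_ge0 j; have c1 := cj_le1 hj; have hP := P3.
set S := Ss j; set E := Ej j.
have hS := Ic_Ss j.
have e : Lambda z n i ^+ (p ^ j.+1) = ((1 + S) + E) ^+ p.
  by rewrite expnSr exprM /E /Ej -/S; congr (_ ^+ _); ring.
have -> : Ej j.+1 = (((1 + S) + E) ^+ p - (1 + S) ^+ p) + mid (1 : L) S 1
    + (S ^+ p - Ss j.+1).
  rewrite /Ej e (expand pp 1 S) expr1n; ring.
have hA : Ic 0 (1 + S).
  by rewrite -[0]addr0; apply: Ic_add; [exact: Ic_1|exact: Ic_le hS].
apply: Ic_add; [apply: Ic_add|].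
- apply: (perturb pp (e := 1)) => //; lra.
- apply: (Ic_mid pp (a := 0) (b := cj j)) => //; first exact: Ic_1.
  move=> k /andP[k1 _]; rewrite mul0r add0r -[X in X <= _]mulr1 ler_wpM2l //.
  by rewrite ler1n.
- apply: Ic_le (Ss_frob j); rewrite lerD2l -[X in X <= _]mulr1 ler_wpM2l //; lra.
Qed.

Lemma crude j : (j <= m2.+1)%N -> Ic (1 + cj j.-1) (Ej j).
Proof.
elim: j => [|j ih] hj.
  by rewrite /Ej expn0 expr1 Lambda_S; left; ring.
apply: step; first lia.
apply: Ic_le (ih (ltnW hj)); rewrite lerDl; exact: cj_ge0.
Qed.

Lemma odd_n_m2 : odd (n + m2) = false.
Proof. by rewrite hn addSn addSn /= addnn odd_double. Qed.

Lemma odd_n_m21 : odd (n + m2.+1) = true.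
Proof. by rewrite hn addnS addSn addSn /= addnn odd_double. Qed.

Lemma x0_m2 : x0 ^+ (p ^ m2) = t * pw (1 / (P * (P - 1))).
Proof.
rewrite /x0 powterm // -signr_odd odd_n_m2 expr0 mul1r hDn natP exprS.
congr (_ * pw _); field; rewrite P1n0 Pn0 /=.
by rewrite expf_neq0 // Pn0.
Qed.

Lemma x0_last : x0 ^+ (p ^ m2.+1) = - (t * pw (1 / (P - 1))).
Proof.
rewrite /x0 powterm // -signr_odd odd_n_m21 expr1 hDn natP.
rewrite mulN1r mulNr; congr (- (_ * pw _)); field; rewrite P1n0 /=.
by rewrite expf_neq0 // Pn0.
Qed.

Lemma Hs_last : Hs m2.+1 = mainSum z mm.
Proof.
rewrite /Hs /mainSum; apply: eq_bigr => k _.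
rewrite x0_last (exprNn (t * _)) exprMn pwX natPm1.
have -> : 1 / (P - 1) * k%:R = k%:R / (P - 1) by rewrite mulrC mul1r.
ring.
Qed.

Lemma Ws_small : (i <= p - 1)%N -> forall j, Ws j = 0.
Proof. by move=> h j; rewrite /Ws h. Qed.

Lemma case1 : (1 <= i)%N -> (i < p - 1)%N ->
  bigOp (Lambda z n i ^+ (p ^ (n - 1)) - 1) (mainSum z i)
        (1 + 1 / ((p * (p - 1))%N%:R)).
Proof.
move=> i1 ip.
have mmi : mm = i by rewrite /mm; apply/minn_idPl; lia.
have := crude (leqnn m2.+1); rewrite /= cj_m2.
have -> : Ej m2.+1 = Lambda z n i ^+ (p ^ (n - 1)) - 1 - mainSum z i.
  by rewrite /Ej /Ss Ws_small ?(ltnW ip) // addr0 Hs_last mmi hn subn1.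
by rewrite natrM natPm1.
Qed.

Lemma onepow (U : L) c (k : nat) : 0 <= c -> Ic c U -> Ic c ((1 + U) ^+ k - 1).
Proof.
move=> c0 hU; elim: k => [|k ih]; first by rewrite expr0 subrr; left.
have -> : (1 + U) ^+ k.+1 - 1 = ((1 + U) ^+ k - 1) * (1 + U) + U by rewrite exprSr; ring.
apply: Ic_add => //; rewrite -[c]addr0; apply: Ic_mul => //.
by rewrite -[0]addr0; apply: Ic_add; [exact: Ic_1|exact: Ic_le hU].
Qed.

Definition wv : rat := 1 / (P - 1) - 1 / P ^+ 2.

Lemma Pr_split r : P ^+ r.+2 = P ^+ 2 * P ^+ r.
Proof. by rewrite -exprD add2n. Qed.

Lemma PjN0 j : P ^+ j != 0. Proof. by rewrite expf_neq0 // Pn0. Qed.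

Lemma el_m2 r : el (n + r) ^+ (p ^ m2) = t * pw (1 / (P - 1) - 1 / P ^+ r.+2).
Proof.
rewrite /el powterm // -signr_odd odd_n_m2 expr0 mul1r dl_nr natP (Pr_split r).
congr (_ * pw _); field.
by rewrite P1n0 Pn0 !PjN0.
Qed.

Lemma el_m21 r : el (n + r) ^+ (p ^ m2.+1) = - (t * pw (P / (P - 1) - 1 / P ^+ r.+1)).
Proof.
rewrite /el powterm // -signr_odd odd_n_m21 expr1 mulN1r mulNr dl_nr natP (exprS P m2) (exprS P r).
congr (- (_ * pw _)); field.
by rewrite P1n0 Pn0 !PjN0.
Qed.

Lemma tpw_Ic q : Ic q (t * pw q).
Proof. by have h := Ic_mul (Ic_t pp p3 zprim) (Ic_pw M q); rewrite add0r in h. Qed.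

Lemma inv_Pr r : 1 / P ^+ r.+2 <= 1 / P ^+ 2.
Proof.
rewrite Pr_split !mul1r invfM -[X in _ <= X]mulr1 ler_wpM2l //.
  by rewrite invr_ge0 exprn_ge0 //; have := P3; lra.
by rewrite invf_le1 ?Pj_gt0 // Pj_ge1.
Qed.

Lemma Ic_wterm2 l : (n <= l)%N -> Ic wv (el l ^+ (p ^ m2)).
Proof.
move=> hl; have -> : l = (n + (l - n))%N by lia.
rewrite el_m2; apply: Ic_le (tpw_Ic _).
by rewrite /wv lerD2l lerN2 inv_Pr.
Qed.

Lemma wv_ge0 : 0 <= wv.
Proof.
rewrite /wv subr_ge0 !mul1r; have hP := P3.
rewrite lef_pV2 ?posrE ?exprn_gt0 //; try lra.
by rewrite expr2; nra.
Qed.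

Lemma Ic_Ws2 : Ic wv (Ws m2).
Proof.
rewrite /Ws; case: ifP => _; first by left.
rewrite big_nat_cond; apply: Ic_sum => l /andP[/andP[h1 h2] _].
exact: Ic_wterm2.
Qed.

Lemma Ws2_frob : Ic (1 + wv * P) (Ws m2 ^+ p - Ws m2.+1).
Proof.
rewrite /Ws; case: ifP => _.
  by rewrite expr0n /= (gtn_eqF (prime_gt0 pp)) subrr; left.
have -> : \sum_(n <= l < (i - p + n).+1) el l ^+ (p ^ m2.+1) =
   \sum_(n <= l < (i - p + n).+1) (el l ^+ (p ^ m2)) ^+ p.
  by apply: eq_bigr => l _; rewrite wterm_p.
rewrite big_nat_cond [X in _ - X]big_nat_cond.
apply: frob_sum => //; first exact: wv_ge0.
by move=> l /andP[/andP[h1 h2] _]; apply: Ic_wterm2.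
Qed.

Lemma pX : p%:R * x0 ^+ (p ^ m2) = t * pw (P / (P - 1) - 1 / P).
Proof.
rewrite x0_m2 (pL M) mulrCA -pw_add; congr (_ * pw _); field.
by rewrite P1n0 Pn0.
Qed.

Lemma pel r : p%:R * el (n + r) ^+ (p ^ m2) = t * pw (P / (P - 1) - 1 / P ^+ r.+2).
Proof.
rewrite el_m2 (pL M) mulrCA -pw_add; congr (_ * pw _); field.
by rewrite P1n0 PjN0.
Qed.

Lemma tele R : p%:R * x0 ^+ (p ^ m2) +
  \sum_(n <= l < (n + R).+1) (p%:R * el l ^+ (p ^ m2) + el l ^+ (p ^ m2.+1)) =
  t * pw (P / (P - 1) - 1 / P ^+ R.+2).
Proof.
elim: R => [|R ih].
  have e0 := pel 0; have e1 := el_m21 0; rewrite addn0 in e0 e1.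
  rewrite addn0 big_nat1 pX e0 e1 expr1; ring.
rewrite big_nat_recr /=; last lia.
have e0 := pel R.+1; have e1 := el_m21 R.+1; rewrite addnS in e0 e1.
rewrite addnS addrA ih e0 e1; ring.
Qed.

Lemma ineq_a : 1 + 1 / (P - 1) <= 1 + 2%:R * wv.
Proof.
rewrite lerD2l -subr_ge0 /wv.
have -> : 2%:R * (1 / (P - 1) - 1 / P ^+ 2) - 1 / (P - 1) =
   (P * P - 2%:R * P + 2%:R) / (P ^+ 2 * (P - 1)).
  by field; rewrite P1n0 Pn0.
have hP := P3; apply: divr_ge0; first nra.
by rewrite mulr_ge0 ?exprn_ge0 //; lra.
Qed.

Lemma ineq_b : 1 + 1 / (P - 1) <= 1 + (cj m2 + wv).
Proof.
rewrite lerD2l -subr_ge0 /wv cj_m2.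
have -> : 1 / (P * (P - 1)) + (1 / (P - 1) - 1 / P ^+ 2) - 1 / (P - 1) =
   1 / (P ^+ 2 * (P - 1)).
  by field; rewrite P1n0 Pn0.
have hP := P3; apply: divr_ge0; first lra.
by rewrite mulr_ge0 ?exprn_ge0 //; lra.
Qed.

Lemma ineq_c : 1 + 1 / (P - 1) <= 1 + wv * P.
Proof.
rewrite lerD2l -subr_ge0 /wv.
have -> : (1 / (P - 1) - 1 / P ^+ 2) * P - 1 / (P - 1) = (P - 1) / P.
  by field; rewrite P1n0 Pn0.
have hP := P3; apply: divr_ge0; lra.
Qed.

Lemma ineq_d : 1 + 1 / (P - 1) <= 2%:R.
Proof.
have hP := P3.
have : 1 / (P - 1) <= 1 by rewrite ler_pdivrMr; lra.
lra.
Qed.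

Lemma case2 : (p - 1 <= i)%N ->
  bigOp (Lambda z n i ^+ (p ^ (n - 1)) - 1)
        (mainSum z (p - 1)
         + t * pw (1 + 1 / ((p - 1)%N%:R) - 1 / ((p ^ (i.+2 - p))%N%:R)))
        (1 + 1 / ((p - 1)%N%:R)).
Proof.
move=> ip.
have mmi : mm = (p - 1)%N by rewrite /mm; apply/minn_idPr.
have hP := P3.
set X := x0 ^+ (p ^ m2).
set U := Hs m2; set W := Ws m2; set E := Ej m2.
have hU : U = \sum_(1 <= k < p) invtfact M k * X ^+ k.
  by rewrite /U /Hs mmi subn1 prednK // prime_gt0.
have hE : Ic 1 E.
  apply: Ic_le (crude (leqnSn m2)); rewrite lerDl; exact: cj_ge0.
have c0 := cj_ge0 m2; have cm := cj_m2.
have hX : Ic (cj m2) X.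
  rewrite /X cj_eq; apply: Ic_exp; exact: Ic_x0.
have hUc : Ic (cj m2) U := Ic_Hs m2.
have hW : Ic wv W := Ic_Ws2.
have w0 := wv_ge0.
have cP : cj m2 * P = 1 / (P - 1) by rewrite cm; field; rewrite P1n0 Pn0.
have hL : Lambda z n i ^+ (p ^ (n - 1)) = ((1 + U + W) + E) ^+ p.
  have e1 : (n - 1 = m2.+1)%N by rewrite hn subn1.
  rewrite e1 expnSr exprM /E /Ej /Ss -/U -/W; congr (_ ^+ _); ring.
have hexp : (1 + U + W) ^+ p = (1 + U) ^+ p + W ^+ p
     + (1 + U) ^+ (p - 1) * W *+ p + mid (1 + U) W 2.
  by rewrite (expand pp) (mid1 pp); ring.
have key : Lambda z n i ^+ (p ^ (n - 1)) - 1 -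
   (Hs m2.+1 + (p%:R * X + p%:R * W + Ws m2.+1)) =
   (((1 + U + W) + E) ^+ p - (1 + U + W) ^+ p) + mid (1 + U) W 2
   + p%:R * (((1 + U) ^+ (p - 1) - 1) * W) + (W ^+ p - Ws m2.+1)
   + ((1 + U) ^+ p - 1 - U ^+ p - p%:R * X) + (U ^+ p - Hs m2.+1).
  rewrite hL hexp -mulr_natr; ring.
have hmain : Hs m2.+1 = mainSum z (p - 1) by rewrite Hs_last mmi.
have htail : p%:R * X + p%:R * W + Ws m2.+1 =
    t * pw (1 + 1 / ((p - 1)%N%:R) - 1 / ((p ^ (i.+2 - p))%N%:R)).
  rewrite natPm1 natP.
  have -> : 1 + 1 / (P - 1) = P / (P - 1) by field; rewrite P1n0.
  rewrite /W /Ws; case: ifP => hi.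
    have -> : (i.+2 - p = 1)%N by lia.
    by rewrite mulr0 !addr0 /X pX expr1.
  have -> : (i - p + n = n + (i - p))%N by lia.
  have -> : (i.+2 - p = (i - p).+2)%N by lia.
  rewrite -(tele (i - p)) mulr_sumr -addrA -big_split /=.
  by rewrite /X.
suff goal' : Ic (1 + 1 / (P - 1)) (Lambda z n i ^+ (p ^ (n - 1)) - 1 -
   (Hs m2.+1 + (p%:R * X + p%:R * W + Ws m2.+1))).
  by move: goal'; rewrite hmain htail -natPm1.
have hd := ineq_d.
have hA : Ic 0 (1 + U).
  rewrite -[0 : rat]addr0; apply: Ic_add; [exact: Ic_1|exact: Ic_le hUc].
have t1 : Ic (1 + 1 / (P - 1)) (((1 + U + W) + E) ^+ p - (1 + U + W) ^+ p).
  apply: (@perturb _ M pp (1 + U + W) E 1) => //.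
  - rewrite -[0 : rat]addr0; apply: Ic_add => //; exact: Ic_le hW.
  - rewrite mul1r; lra.
have t2 : Ic (1 + 1 / (P - 1)) (mid (1 + U) W 2).
  apply: Ic_le ineq_a _.
  apply: (Ic_mid pp (a := 0) (b := wv)) => //.
  move=> k /andP[k2 _]; rewrite mul0r add0r mulrC ler_wpM2l // ler_nat.
  by [].
have t3 : Ic (1 + 1 / (P - 1)) (p%:R * (((1 + U) ^+ (p - 1) - 1) * W)).
  apply: Ic_le ineq_b _.
  apply: Ic_mul; first exact: Ic_p.
  by apply: Ic_mul => //; apply: onepow.
have t4 : Ic (1 + 1 / (P - 1)) (W ^+ p - Ws m2.+1).
  exact: Ic_le ineq_c Ws2_frob.
have t5 : Ic (1 + 1 / (P - 1)) ((1 + U) ^+ p - 1 - U ^+ p - p%:R * X).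
  rewrite hU; apply: Ic_le (poly_key_a pp p3 _ _ hX) => //.
  + by rewrite cP.
  + by rewrite cP ler_pdivrMr; lra.
have t6 : Ic (1 + 1 / (P - 1)) (U ^+ p - Hs m2.+1).
  by apply: Ic_le (Hs_frob m2); rewrite cP.
by rewrite key; do 5 (apply: Ic_add => //).
Qed.

End Main.

Unset Implicit Arguments.

Theorem proposition3p18 (p : nat) (M : pMN p) (z : mnF M) (n : nat) :
  prime p -> (3 <= p)%N -> (2 * (p - 1))%N.-primitive_root z -> (2 <= n)%N ->
  (forall i : nat, (1 <= i)%N -> (i < p - 1)%N ->
     bigOp (Lambda z n i ^+ (p ^ (n - 1)) - 1) (mainSum z i)
           (1 + 1 / ((p * (p - 1))%N%:R))) /\
  (forall i : nat, (p - 1 <= i)%N ->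
     bigOp (Lambda z n i ^+ (p ^ (n - 1)) - 1)
           (mainSum z (p - 1)
            + @tm _ M z * @pw _ M (1 + 1 / ((p - 1)%N%:R) - 1 / ((p ^ (i.+2 - p))%N%:R)))
           (1 + 1 / ((p - 1)%N%:R))).
Proof.
move=> pp p3 zprim n2.
have hn : n = (n - 2).+2 by lia.
split.
- by move=> i i1 ip; apply: (case1 (m2 := (n - 2)%N) hn pp p3 zprim).
- by move=> i ip; apply: (case2 (m2 := (n - 2)%N) hn pp p3 zprim).
Qed.
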